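(* If a countable equivalence structure $\mathcal{A}$ has finitely many infinite equivalence classes, then $\mathcal{A}$ is relatively $\Delta^0_2$ bi-embeddably categorical.
   Context: An equivalence structure $\mathcal{A}=(A,E)$ has universe $A\subseteq\omega$ and an equivalence relation $E$ on $A$; structures are identified with their atomic diagrams. Two structures are bi-embeddable if each embeds into the other; such a structure is a bi-embeddable copy. A countable structure $\mathcal{A}$ is relatively $\Delta^0_2$ bi-embeddably categorical if for every bi-embeddable copy $\mathcal{B}$ of $\mathcal{A}$ there are embeddings $\mathcal{A}\hookrightarrow\mathcal{B}$ and $\mathcal{B}\hookrightarrow\mathcal{A}$ that are $\Delta^0_2$ relative to $\mathcal{A}\oplus\mathcal{B}$ (i.e., computable in $(\mathcal{A}\oplus\mathcal{B})'$). *)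

(* Defs.v *)
From Stdlib Require Import Arith Cantor.

Definition natset := nat -> Prop.

Definition join (X Y : natset) : natset :=
  fun n => if Nat.even n then X (Nat.div2 n) else Y (Nat.div2 n).

(* ---------- Oracle partial recursive functions (unary, via Cantor pairing) ---------- *)
Inductive code : Type :=
| CZero | CSucc | CId | CFst | CSnd | COracle
| CPair (f g : code)
| CComp (f g : code)
| CPrec (f g : code)          (* h <x,0> = f x ; h <x,n+1> = g << x,n >, h <x,n> > *)
| CMu (f : code).             (* x |-> least n with f <x,n> = 0 (all earlier defined) *)

Fixpoint encode (c : code) : nat :=
  match c with
  | CZero => Cantor.to_nat (0, 0)
  | CSucc => Cantor.to_nat (1, 0)
  | CId => Cantor.to_nat (2, 0)
  | CFst => Cantor.to_nat (3, 0)
  | CSnd => Cantor.to_nat (4, 0)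
  | COracle => Cantor.to_nat (5, 0)
  | CPair f g => Cantor.to_nat (6, Cantor.to_nat (encode f, encode g))
  | CComp f g => Cantor.to_nat (7, Cantor.to_nat (encode f, encode g))
  | CPrec f g => Cantor.to_nat (8, Cantor.to_nat (encode f, encode g))
  | CMu f => Cantor.to_nat (9, encode f)
  end.

Inductive eval (X : natset) : code -> nat -> nat -> Prop :=
| ev_zero x : eval X CZero x 0
| ev_succ x : eval X CSucc x (S x)
| ev_id x : eval X CId x x
| ev_fst x : eval X CFst x (fst (Cantor.of_nat x))
| ev_snd x : eval X CSnd x (snd (Cantor.of_nat x))
| ev_oracle_in x : X x -> eval X COracle x 1
| ev_oracle_out x : ~ X x -> eval X COracle x 0
| ev_pair f g x a b : eval X f x a -> eval X g x b ->
    eval X (CPair f g) x (Cantor.to_nat (a, b))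
| ev_comp f g x a b : eval X g x a -> eval X f a b -> eval X (CComp f g) x b
| ev_prec0 f g z x y : Cantor.of_nat z = (x, 0) -> eval X f x y ->
    eval X (CPrec f g) z y
| ev_precS f g z x n r y : Cantor.of_nat z = (x, S n) ->
    eval X (CPrec f g) (Cantor.to_nat (x, n)) r ->
    eval X g (Cantor.to_nat (Cantor.to_nat (x, n), r)) y ->
    eval X (CPrec f g) z y
| ev_mu f x n : eval X f (Cantor.to_nat (x, n)) 0 ->
    (forall m, m < n -> exists k, eval X f (Cantor.to_nat (x, m)) (S k)) ->
    eval X (CMu f) x n.

Definition jump (X : natset) : natset :=
  fun n => exists c, encode c = n /\ exists y, eval X c n y.

Definition computable_in (X : natset) (f : nat -> nat) : Prop :=
  exists c, forall x, eval X c x (f x).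

Definition delta02_in (X : natset) (f : nat -> nat) : Prop :=
  computable_in (jump X) f.

Record eqstr : Type := EqStr {
  univ : natset;
  E : nat -> nat -> Prop;
  E_univ : forall x y, E x y -> univ x /\ univ y;
  E_refl : forall x, univ x -> E x x;
  E_sym : forall x y, E x y -> E y x;
  E_trans : forall x y z, E x y -> E y z -> E x z
}.

(* atomic diagram of a structure, coded as a set of naturals:
   2n encodes "n in A", 2<x,y>+1 encodes "x E y" (equality is decidable) *)
Definition diag (A : eqstr) : natset :=
  fun n => if Nat.even n then univ A (Nat.div2 n)
           else let p := Cantor.of_nat (Nat.div2 n) in E A (fst p) (snd p).

Definition is_embedding (A B : eqstr) (f : nat -> nat) : Prop :=
  (forall x, univ A x -> univ B (f x)) /\
  (forall x y, univ A x -> univ A y -> f x = f y -> x = y) /\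
  (forall x y, univ A x -> univ A y -> (E A x y <-> E B (f x) (f y))).

Definition embeds (A B : eqstr) : Prop := exists f, is_embedding A B f.

Definition bi_embeddable (A B : eqstr) : Prop := embeds A B /\ embeds B A.

Definition rel_delta02_bi_emb_categorical (A : eqstr) : Prop :=
  forall B : eqstr, bi_embeddable A B ->
    (exists f, is_embedding A B f /\ delta02_in (join (diag A) (diag B)) f) /\
    (exists g, is_embedding B A g /\ delta02_in (join (diag A) (diag B)) g).

Definition infinite_class (A : eqstr) (x : nat) : Prop :=
  forall n, exists y, n <= y /\ E A x y.

(* A has finitely many infinite equivalence classes: a finite list of elements
   meets every infinite class *)
Definition finitely_many_infinite_classes (A : eqstr) : Prop :=
  exists s : list nat, forall x, univ A x -> infinite_class A x ->
    exists z, List.In z s /\ E A x z.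

(* Main.v *)
Require Import Defs.
From Stdlib Require Import Arith Lia List Cantor Classical ClassicalEpsilon.
Import ListNotations.

Definition pr a b := Cantor.to_nat (a, b).
Definition p1 z := fst (Cantor.of_nat z).
Definition p2 z := snd (Cantor.of_nat z).
Lemma p1_pr a b : p1 (pr a b) = a.
Proof. unfold p1, pr. now rewrite Cantor.cancel_of_to. Qed.
Lemma p2_pr a b : p2 (pr a b) = b.
Proof. unfold p2, pr. now rewrite Cantor.cancel_of_to. Qed.
Lemma pr_surj z : pr (p1 z) (p2 z) = z.
Proof. unfold p1, p2, pr. rewrite <- surjective_pairing. apply Cantor.cancel_to_of. Qed.
Lemma pr_inj a b c d : pr a b = pr c d -> a = c /\ b = d.
Proof. intro H. split; [rewrite <- (p1_pr a b), H| rewrite <- (p2_pr a b), H]; 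
  [apply p1_pr | apply p2_pr]. Qed.

Lemma prec_det X f g :
  (forall x y1 y2, eval X f x y1 -> eval X f x y2 -> y1 = y2) ->
  (forall x y1 y2, eval X g x y1 -> eval X g x y2 -> y1 = y2) ->
  forall n x z y1 y2, Cantor.of_nat z = (x, n) ->
  eval X (CPrec f g) z y1 -> eval X (CPrec f g) z y2 -> y1 = y2.
Proof.
  intros Hf Hg n. induction n; intros x z y1 y2 Hz H1 H2;
  inversion H1; subst; inversion H2; subst; rewrite Hz in *;
  repeat match goal with H : (_, _) = (_, _) |- _ => injection H; clear H; intros; subst end;
  try discriminate.
  - eauto.
  - match goal with H4 : eval X (CPrec f g) (Cantor.to_nat (?x0, _)) ?r, H6 : eval X (CPrec f g) _ ?r0 |- _ =>
      assert (r = r0) by (eapply IHn; [apply Cantor.cancel_of_to| exact H4 | exact H6]) end.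
    subst. eauto.
Qed.

Lemma eval_det X c : forall x y1 y2, eval X c x y1 -> eval X c x y2 -> y1 = y2.
Proof.
  induction c; intros x y1 y2 H1 H2.
  9: { destruct (Cantor.of_nat x) as [a n] eqn:E. exact (prec_det X c1 c2 IHc1 IHc2 n a x y1 y2 E H1 H2). }
  all: inversion H1; subst; inversion H2; subst;
    try reflexivity; try contradiction.
  - f_equal; eauto.
  - assert (a = a0) by eauto. subst; eauto.
  - destruct (lt_eq_lt_dec y1 y2) as [[Hl|Hl]|Hl]; auto.
    + destruct (H5 _ Hl) as [k Hk]. specialize (IHc _ _ _ H0 Hk). discriminate.
    + destruct (H3 _ Hl) as [k Hk]. specialize (IHc _ _ _ H4 Hk). discriminate.
Qed.

Lemma tn_inj a b c d : Cantor.to_nat (a, b) = Cantor.to_nat (c, d) -> a = c /\ b = d.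
Proof. intro H. apply Cantor.to_nat_inj in H. now injection H. Qed.

Lemma encode_inj c d : encode c = encode d -> c = d.
Proof.
  revert d; induction c; destruct d; cbn [encode]; intro H;
  repeat match goal with H : Cantor.to_nat _ = Cantor.to_nat _ |- _ =>
    apply tn_inj in H; destruct H end;
  try discriminate; try reflexivity; subst;
  try (f_equal; auto).
Qed.

Definition EMI := excluded_middle_informative.
Definition tv (P : Prop) : nat := if EMI P then 0 else 1.
Lemma tvT (P : Prop) : P -> tv P = 0.
Proof. unfold tv; destruct (EMI P); tauto. Qed.
Lemma tvF (P : Prop) : ~ P -> tv P = 1.
Proof. unfold tv; destruct (EMI P); tauto. Qed.
Lemma tv_iff (P Q : Prop) : (P <-> Q) -> tv P = tv Q.
Proof. intro H; unfold tv; destruct (EMI P), (EMI Q); tauto. Qed.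

Definition Dec Y (P : nat -> Prop) := computable_in Y (fun x => tv (P x)).
Definition C2 Y (F : nat -> nat -> nat) := computable_in Y (fun z => F (p1 z) (p2 z)).

Lemma comp_ext Y f g : computable_in Y f -> (forall x, f x = g x) -> computable_in Y g.
Proof. intros [c Hc] H. exists c. intro x. rewrite <- H. apply Hc. Qed.

Fixpoint kc n := match n with 0 => CZero | S n => CComp CSucc (kc n) end.
Lemma kc_eval Y n x : eval Y (kc n) x n.
Proof. induction n; simpl. constructor. econstructor. apply IHn. constructor. Qed.

Lemma comp_const Y k : computable_in Y (fun _ => k).
Proof. exists (kc k). intro; apply kc_eval. Qed.
Lemma comp_id Y : computable_in Y (fun x => x).
Proof. exists CId. intro; constructor. Qed.
Lemma comp_S Y : computable_in Y S.
Proof. exists CSucc. intro; constructor. Qed.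
Lemma comp_p1 Y : computable_in Y p1.
Proof. exists CFst. intro; constructor. Qed.
Lemma comp_p2 Y : computable_in Y p2.
Proof. exists CSnd. intro; constructor. Qed.
Lemma comp_comp Y f g : computable_in Y f -> computable_in Y g -> computable_in Y (fun x => f (g x)).
Proof. intros [cf Hf] [cg Hg]. exists (CComp cf cg). intro x. econstructor; eauto. Qed.
Lemma comp_pair Y f g : computable_in Y f -> computable_in Y g -> computable_in Y (fun x => pr (f x) (g x)).
Proof. intros [cf Hf] [cg Hg]. exists (CPair cf cg). intro x. unfold pr. constructor; eauto. Qed.
Lemma comp_app2 Y F f g : C2 Y F -> computable_in Y f -> computable_in Y g ->
  computable_in Y (fun x => F (f x) (g x)).
Proof.
  intros HF Hf Hg. eapply comp_ext. apply (comp_comp _ _ _ HF (comp_pair _ _ _ Hf Hg)).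
  intro x; simpl. now rewrite p1_pr, p2_pr.
Qed.
Lemma comp_oracle Y : computable_in Y (fun x => if EMI (Y x) then 1 else 0).
Proof. exists COracle. intro x. destruct (EMI (Y x)); constructor; auto. Qed.

Fixpoint R (b : nat -> nat) (s : nat -> nat -> nat) x n :=
  match n with 0 => b x | S n => s (pr x n) (R b s x n) end.
Lemma comp_rec Y b s : computable_in Y b -> C2 Y s -> C2 Y (R b s).
Proof.
  intros [cb Hb] [cs Hs]. exists (CPrec cb cs).
  assert (K : forall n x, eval Y (CPrec cb cs) (pr x n) (R b s x n)).
  { induction n; intro x; simpl.
    - eapply ev_prec0. apply Cantor.cancel_of_to. apply Hb.
    - eapply ev_precS. apply Cantor.cancel_of_to. apply IHn.
      specialize (Hs (pr (pr x n) (R b s x n))). rewrite p1_pr, p2_pr in Hs. exact Hs. }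
  intro z. rewrite <- (pr_surj z) at 1. apply K.
Qed.

Lemma least_ex (P : nat -> Prop) : (exists n, P n) -> exists n, P n /\ forall m, m < n -> ~ P m.
Proof.
  intros [n Hn]. induction n as [n IH] using (well_founded_induction lt_wf).
  destruct (classic (exists m, m < n /\ P m)) as [[m [Hm1 Hm2]]|Hno].
  - exact (IH m Hm1 Hm2).
  - exists n. split; auto. intros m Hm HP. apply Hno; eauto.
Qed.

Lemma choice_nat (Q : nat -> nat -> Prop) : (forall x, exists n, Q x n) -> exists h, forall x, Q x (h x).
Proof.
  intro H. exists (fun x => proj1_sig (constructive_indefinite_description _ (H x))).
  intro x. exact (proj2_sig (constructive_indefinite_description _ (H x))).
Qed.

Lemma comp_mu Y (P : nat -> nat -> Prop) : Dec Y (fun z => P (p1 z) (p2 z)) ->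
  (forall x, exists n, P x n) ->
  exists h, computable_in Y h /\ forall x, P x (h x) /\ forall m, m < h x -> ~ P x m.
Proof.
  intros [c Hc] Hex.
  destruct (choice_nat (fun x n => P x n /\ forall m, m < n -> ~ P x m)) as [h Hh].
  { intro x. apply least_ex. apply Hex. }
  exists h. split; auto. exists (CMu c). intro x. destruct (Hh x) as [H1 H2]. constructor.
  - specialize (Hc (pr x (h x))). rewrite p1_pr, p2_pr, tvT in Hc; auto.
  - intros m Hm. exists 0. specialize (Hc (pr x m)). rewrite p1_pr, p2_pr, tvF in Hc; auto.
Qed.

Definition ifz (c a b : nat) := match c with 0 => a | S _ => b end.
Lemma comp_ifz Y c a b : computable_in Y c -> computable_in Y a -> computable_in Y b ->
  computable_in Y (fun x => ifz (c x) (a x) (b x)).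
Proof.
  intros Hc Ha Hb.
  assert (H : C2 Y (R p1 (fun z _ => p2 (p1 z)))).
  { apply comp_rec. apply comp_p1. unfold C2. apply (comp_comp _ _ _ (comp_p2 Y)).
    apply (comp_comp _ _ _ (comp_p1 Y)). apply comp_p1. }
  eapply comp_ext. apply (comp_app2 _ _ _ _ H (comp_pair _ _ _ Ha Hb) Hc).
  intro x. simpl. destruct (c x); simpl; rewrite ?p1_pr, ?p2_pr; reflexivity.
Qed.

Lemma comp_add Y f g : computable_in Y f -> computable_in Y g -> computable_in Y (fun x => f x + g x).
Proof.
  intros Hf Hg.
  assert (H : C2 Y (R (fun x => x) (fun _ a => S a))).
  { apply comp_rec. apply comp_id. unfold C2. apply (comp_comp _ _ _ (comp_S Y)). apply comp_p2. }
  eapply comp_ext. apply (comp_app2 _ _ _ _ H Hf Hg).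
  intro x. simpl. generalize (g x). induction n; simpl; lia.
Qed.

Lemma comp_sub Y f g : computable_in Y f -> computable_in Y g -> computable_in Y (fun x => f x - g x).
Proof.
  intros Hf Hg.
  assert (Hp : C2 Y (R (fun _ => 0) (fun z _ => p2 z))).
  { apply comp_rec. apply comp_const. unfold C2. apply (comp_comp _ _ _ (comp_p2 Y)). apply comp_p1. }
  assert (Hpred : computable_in Y pred).
  { eapply comp_ext. apply (comp_app2 _ _ _ _ Hp (comp_const Y 0) (comp_id Y)).
    intro x; destruct x; simpl; rewrite ?p2_pr; reflexivity. }
  assert (H : C2 Y (R (fun x => x) (fun _ a => pred a))).
  { apply comp_rec. apply comp_id. unfold C2. apply (comp_comp _ _ _ Hpred). apply comp_p2. }
  eapply comp_ext. apply (comp_app2 _ _ _ _ H Hf Hg).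
  intro x. simpl. generalize (g x). induction n; simpl. lia. rewrite IHn. lia.
Qed.

Lemma dec_ext Y P Q : Dec Y P -> (forall x, P x <-> Q x) -> Dec Y Q.
Proof. intros H HPQ. eapply comp_ext. apply H. intro x. apply tv_iff, HPQ. Qed.
Lemma dec_comp Y P g : Dec Y P -> computable_in Y g -> Dec Y (fun x => P (g x)).
Proof. intros H Hg. unfold Dec. apply (comp_comp _ _ _ H Hg). Qed.
Lemma dec_not Y P : Dec Y P -> Dec Y (fun x => ~ P x).
Proof.
  intro H. eapply comp_ext. apply (comp_ifz _ _ _ _ H (comp_const Y 1) (comp_const Y 0)).
  intro x. simpl. destruct (classic (P x)). rewrite (tvT (P x)), tvF; auto. rewrite (tvF (P x)), tvT; auto.
Qed.
Lemma dec_and Y P Q : Dec Y P -> Dec Y Q -> Dec Y (fun x => P x /\ Q x).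
Proof.
  intros H1 H2. eapply comp_ext. apply (comp_ifz _ _ _ _ H1 H2 (comp_const Y 1)).
  intro x. simpl. destruct (classic (P x)).
  - rewrite (tvT (P x)); auto. simpl. apply tv_iff. tauto.
  - rewrite (tvF (P x)), (tvF (P x /\ Q x)); [reflexivity|tauto|auto].
Qed.
Lemma dec_or Y P Q : Dec Y P -> Dec Y Q -> Dec Y (fun x => P x \/ Q x).
Proof.
  intros H1 H2. eapply comp_ext. apply (comp_ifz _ _ _ _ H1 (comp_const Y 0) H2).
  intro x. simpl. destruct (classic (P x)).
  - rewrite (tvT (P x)), (tvT (P x \/ Q x)); auto.
  - rewrite (tvF (P x)); auto. simpl. apply tv_iff. tauto.
Qed.
Lemma dec_const Y (P : Prop) : Dec Y (fun _ => P).
Proof. unfold Dec. apply comp_const. Qed.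
Lemma dec_eq Y f g : computable_in Y f -> computable_in Y g -> Dec Y (fun x => f x = g x).
Proof.
  intros Hf Hg. eapply comp_ext.
  apply (comp_ifz _ _ _ _ (comp_add _ _ _ (comp_sub _ _ _ Hf Hg) (comp_sub _ _ _ Hg Hf)) (comp_const Y 0) (comp_const Y 1)).
  intro x. simpl. destruct (Nat.eq_dec (f x) (g x)).
  - rewrite tvT; auto. replace (f x - g x + (g x - f x)) with 0 by lia. reflexivity.
  - rewrite tvF; auto. destruct (f x - g x + (g x - f x)) eqn:E. lia. reflexivity.
Qed.
Lemma dec_le Y f g : computable_in Y f -> computable_in Y g -> Dec Y (fun x => f x <= g x).
Proof.
  intros Hf Hg. eapply comp_ext.
  apply (comp_ifz _ _ _ _ (comp_sub _ _ _ Hf Hg) (comp_const Y 0) (comp_const Y 1)).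
  intro x. simpl. destruct (le_lt_dec (f x) (g x)).
  - rewrite tvT; auto. replace (f x - g x) with 0 by lia. reflexivity.
  - rewrite tvF; [|lia]. destruct (f x - g x) eqn:E. lia. reflexivity.
Qed.
Lemma dec_oracle Y q : computable_in Y q -> Dec Y (fun x => Y (q x)).
Proof.
  intro Hq. eapply comp_ext.
  apply (comp_ifz _ _ _ _ (comp_comp _ _ _ (comp_oracle Y) Hq) (comp_const Y 1) (comp_const Y 0)).
  intro x. simpl. destruct (EMI (Y (q x))); simpl. rewrite tvT; auto. rewrite tvF; auto.
Qed.

Lemma dec_app2 Y (P : nat -> nat -> Prop) f g : Dec Y (fun z => P (p1 z) (p2 z)) ->
  computable_in Y f -> computable_in Y g -> Dec Y (fun x => P (f x) (g x)).
Proof.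
  intros H Hf Hg. eapply dec_ext. apply (dec_comp _ _ _ H (comp_pair _ _ _ Hf Hg)).
  intro x; simpl; rewrite p1_pr, p2_pr; tauto.
Qed.

Definition pb (P : Prop) : bool := if EMI P then true else false.
Definition cnt (P : nat -> Prop) W := length (filter (fun v => pb (P v)) (seq 0 W)).
Lemma cnt_S P W : cnt P (S W) = cnt P W + (if EMI (P W) then 1 else 0).
Proof.
  unfold cnt. rewrite seq_S, filter_app, length_app. simpl. unfold pb.
  destruct (EMI (P W)); simpl; lia.
Qed.
Lemma comp_cnt Y (P : nat -> nat -> Prop) : Dec Y (fun z => P (p1 z) (p2 z)) ->
  C2 Y (fun x W => cnt (P x) W).
Proof.
  intro H.
  assert (H2 : C2 Y (R (fun _ => 0) (fun z a => a + (1 - tv (P (p1 z) (p2 z)))))).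
  { apply comp_rec. apply comp_const. unfold C2.
    apply comp_add. apply comp_p2. apply comp_sub. apply comp_const.
    apply (comp_comp _ _ _ H (comp_p1 Y)). }
  eapply comp_ext. apply H2. intro z. simpl. generalize (p2 z) as n. generalize (p1 z) as x.
  intros x n. induction n; simpl. reflexivity.
  rewrite cnt_S, IHn, p1_pr, p2_pr. unfold tv. destruct (EMI (P x n)); simpl; lia.
Qed.

Lemma dec_inlist Y (P : nat -> nat -> Prop) L : Dec Y (fun z => P (p1 z) (p2 z)) ->
  Dec Y (fun x => exists z, In z L /\ P x z).
Proof.
  intro H. induction L as [|a L IH].
  - eapply dec_ext. apply (dec_const Y False). intro x. simpl. split. tauto. intros [z [[] _]].
  - eapply dec_ext. apply (dec_or _ _ _ (dec_app2 _ _ _ _ H (comp_id Y) (comp_const Y a)) IH).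
    intro x. simpl. split.
    + intros [Ha|[z [Hz1 Hz2]]]. exists a; auto. exists z; auto.
    + intros [z [[Hz|Hz] Hz2]]. subst; auto. right; exists z; auto.
Qed.

Fixpoint fm (P : nat -> nat -> Prop) (v : nat -> nat) (L : list nat) x :=
  match L with [] => 0 | z :: L => if EMI (P x z) then v z else fm P v L x end.
Lemma comp_fm Y P v L : Dec Y (fun z => P (p1 z) (p2 z)) -> computable_in Y (fm P v L).
Proof.
  intro H. induction L as [|a L IH]; simpl.
  - apply comp_const.
  - eapply comp_ext.
    apply (comp_ifz _ _ _ _ (dec_app2 _ _ _ _ H (comp_id Y) (comp_const Y a)) (comp_const Y (v a)) IH).
    intro x. simpl. unfold tv. destruct (EMI (P x a)); reflexivity.
Qed.

Lemma dec_jump Y (P : nat -> nat -> Prop) : Dec Y (fun z => P (p1 z) (p2 z)) ->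
  Dec (jump Y) (fun x => exists y, P x y).
Proof.
  intros [cP Hc].
  set (F := fun p => CComp cP (CPair (kc p) CSnd)).
  set (D := fun p => CComp (CMu (F p)) CZero).
  assert (HF : forall p x m, eval Y (F p) (Cantor.to_nat (x, m)) (tv (P p m))).
  { intros p x m. eapply ev_comp.
    - assert (Hs := ev_snd Y (Cantor.to_nat (x, m))). rewrite Cantor.cancel_of_to in Hs.
      apply (ev_pair _ _ _ _ _ _ (kc_eval Y p _) Hs).
    - specialize (Hc (pr p m)). rewrite p1_pr, p2_pr in Hc. exact Hc. }
  assert (Hh : forall p n, (exists v, eval Y (D p) n v) <-> exists y, P p y).
  { intros p n. split.
    - intros [v Hv]. inversion Hv; subst.
      match goal with H : eval Y CZero _ _ |- _ => inversion H; subst end.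
      match goal with H : eval Y (CMu _) _ _ |- _ => inversion H; subst end.
      exists v. specialize (HF p 0 v).
      match goal with H : eval Y (F p) _ 0 |- _ => assert (E := eval_det _ _ _ _ _ H HF) end. unfold tv in E. destruct (EMI (P p v)); auto. discriminate.
    - intro Hex. destruct (least_ex _ Hex) as [y [Hy1 Hy2]]. exists y.
      eapply ev_comp. constructor. constructor.
      + specialize (HF p 0 y). rewrite tvT in HF; auto.
      + intros m Hm. exists 0. specialize (HF p 0 m). rewrite tvF in HF; auto. }
  set (EK := fun p => encode (kc p)).
  assert (HEK : computable_in (jump Y) EK).
  { assert (H : C2 (jump Y) (R (fun _ => encode CZero) (fun _ a => pr 7 (pr (encode CSucc) a)))).
    { apply comp_rec. apply comp_const. unfold C2. apply comp_pair. apply comp_const.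
      apply comp_pair. apply comp_const. apply comp_p2. }
    eapply comp_ext. apply (comp_app2 _ _ _ _ H (comp_const _ 0) (comp_id _)).
    intro p. simpl. induction p. reflexivity. simpl. rewrite IHp. reflexivity. }
  assert (HED : computable_in (jump Y) (fun p => encode (D p))).
  { apply (comp_ext _ (fun p => pr 7 (pr (pr 9 (pr 7 (pr (encode cP) (pr 6 (pr (EK p) (encode CSnd)))))) (encode CZero)))).
    - apply (comp_pair _ _ _ (comp_const _ 7)). apply comp_pair. 2: apply comp_const.
      apply (comp_pair _ _ _ (comp_const _ 9)). apply (comp_pair _ _ _ (comp_const _ 7)).
      apply (comp_pair _ _ _ (comp_const _ (encode cP))). apply (comp_pair _ _ _ (comp_const _ 6)).
      apply (comp_pair _ _ _ HEK (comp_const _ (encode CSnd))).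
    - intro p. reflexivity. }
  eapply dec_ext. apply (dec_oracle _ _ HED).
  intro x. unfold jump. split.
  - intros [c [Hc1 [v Hv]]]. apply encode_inj in Hc1. subst c. apply (Hh x (encode (D x))). eauto.
  - intro H. exists (D x). split; auto. apply (Hh x (encode (D x))). auto.
Qed.

Lemma comp_lift Y f : computable_in Y f -> computable_in (jump Y) f.
Proof.
  intro Hf.
  assert (H1 : Dec Y (fun z => (fun a (_ : nat) => f (p1 a) = p2 a) (p1 z) (p2 z))).
  { simpl. apply dec_eq. apply (comp_comp _ _ _ Hf). apply (comp_comp _ _ _ (comp_p1 Y) (comp_p1 Y)).
    apply (comp_comp _ _ _ (comp_p2 Y) (comp_p1 Y)). }
  apply dec_jump in H1.
  destruct (comp_mu (jump Y) (fun x v => exists _ : nat, f (p1 (pr x v)) = p2 (pr x v))) as [h [Hh1 Hh2]].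
  { eapply dec_ext. apply H1. intro z. rewrite pr_surj. tauto. }
  { intro x. exists (f x). exists 0. now rewrite p1_pr, p2_pr. }
  eapply comp_ext. apply Hh1. intro x. destruct (Hh2 x) as [[_ E] _]. rewrite p1_pr, p2_pr in E. auto.
Qed.

Lemma dec_lift Y P : Dec Y P -> Dec (jump Y) P.
Proof. apply comp_lift. Qed.

Definition mu (P : nat -> nat -> Prop) (x : nat) : nat :=
  match EMI (exists n, P x n) with
  | left H => proj1_sig (constructive_indefinite_description _ (least_ex _ H))
  | right _ => 0 end.
Lemma mu_spec P x : (exists n, P x n) -> P x (mu P x) /\ forall m, m < mu P x -> ~ P x m.
Proof.
  intro H. unfold mu. destruct (EMI (exists n, P x n)); [|contradiction].
  exact (proj2_sig (constructive_indefinite_description _ (least_ex _ e))).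
Qed.
Lemma least_uniq (P : nat -> Prop) a b : P a -> (forall m, m < a -> ~ P m) ->
  P b -> (forall m, m < b -> ~ P m) -> a = b.
Proof.
  intros Ha Ha' Hb Hb'. destruct (lt_eq_lt_dec a b) as [[H|H]|H]; auto.
  - exfalso; exact (Hb' _ H Ha).
  - exfalso; exact (Ha' _ H Hb).
Qed.
Lemma mu_ext P Q x y : (forall n, P x n <-> Q y n) -> (exists n, P x n) -> mu P x = mu Q y.
Proof.
  intros H Hex. assert (Hey : exists n, Q y n) by (destruct Hex as [n Hn]; exists n; apply H; auto).
  destruct (mu_spec _ _ Hex) as [H1 H2]. destruct (mu_spec _ _ Hey) as [H3 H4].
  apply (least_uniq (Q y)). apply H; auto. intros m Hm HQ. apply (H2 m Hm). apply H; auto.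
  auto. auto.
Qed.
Lemma comp_mu2 Y P : Dec Y (fun z => P (p1 z) (p2 z)) -> (forall x, exists n, P x n) ->
  computable_in Y (mu P).
Proof.
  intros HD Hex. destruct (comp_mu Y P HD Hex) as [h [Hh1 Hh2]].
  eapply comp_ext. apply Hh1. intro x. destruct (mu_spec _ _ (Hex x)) as [H1 H2].
  destruct (Hh2 x). apply (least_uniq (P x)); auto.
Qed.

Lemma cnt_0 P : cnt P 0 = 0.
Proof. reflexivity. Qed.
Lemma cnt_mono P W W' : W <= W' -> cnt P W <= cnt P W'.
Proof. induction 1. lia. rewrite cnt_S. lia. Qed.
Lemma cnt_le P W : cnt P W <= W.
Proof. induction W. rewrite cnt_0; lia. rewrite cnt_S. destruct (EMI (P W)); lia. Qed.
Lemma cnt_ext P Q W : (forall v, P v <-> Q v) -> cnt P W = cnt Q W.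
Proof. intro H. induction W. reflexivity. rewrite !cnt_S, IHW.
  destruct (EMI (P W)), (EMI (Q W)); try reflexivity; firstorder. Qed.
Lemma cnt_ivt P W i : S i <= cnt P W -> exists w, w < W /\ P w /\ cnt P w = i.
Proof.
  induction W; intro H. rewrite cnt_0 in H; lia.
  rewrite cnt_S in H. destruct (le_lt_dec (S i) (cnt P W)).
  - destruct (IHW l) as [w [? ?]]. exists w; split; auto.
  - destruct (EMI (P W)). exists W; split; auto; split; auto; lia. lia.
Qed.
Lemma cnt_hit P W v : v < W -> P v -> cnt P v < cnt P W.
Proof.
  intros H1 H2. assert (cnt P (S v) <= cnt P W) by (apply cnt_mono; lia).
  rewrite cnt_S in H. destruct (EMI (P v)); [lia|contradiction].
Qed.
Lemma cnt_zero P W : cnt P W = 0 <-> forall v, v < W -> ~ P v.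
Proof.
  split.
  - intros H v Hv Hp. assert (K := cnt_hit _ _ _ Hv Hp). lia.
  - induction W; intro H. reflexivity. rewrite cnt_S, IHW.
    destruct (EMI (P W)). exfalso; apply (H W); auto. reflexivity.
    intros v Hv; apply H; lia.
Qed.
Lemma cnt_bound P N : (forall v, N <= v -> ~ P v) -> forall W, cnt P W <= cnt P N.
Proof.
  intros H W. induction W. rewrite cnt_0; lia.
  destruct (le_lt_dec (S W) N). apply cnt_mono; lia.
  rewrite cnt_S. destruct (EMI (P W)). exfalso; apply (H W); auto; lia. lia.
Qed.
Lemma cnt_unbounded P : (forall n, exists y, n <= y /\ P y) -> forall m, exists W, m <= cnt P W.
Proof.
  intros H m. induction m. exists 0; lia.
  destruct IHm as [W HW]. destruct (H W) as [y [Hy1 Hy2]]. exists (S y).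
  assert (cnt P W <= cnt P y) by (apply cnt_mono; auto). rewrite cnt_S.
  destruct (EMI (P y)); [lia|contradiction].
Qed.
Lemma cnt_big P n W : S n <= cnt P W -> exists v, n <= v /\ P v.
Proof.
  intro H. apply NNPP. intro Hno.
  assert (K := cnt_bound P n (fun v Hv Hp => Hno (ex_intro _ v (conj Hv Hp))) W).
  assert (cnt P n <= n) by apply cnt_le. lia.
Qed.

Lemma filter_cnt P W : cnt P W = length (filter (fun v => pb (P v)) (seq 0 W)).
Proof. reflexivity. Qed.

Lemma cnt_inj P Q (h : nat -> nat) :
  (forall u v, P u -> P v -> h u = h v -> u = v) -> (forall v, P v -> Q (h v)) ->
  forall W, exists W', cnt P W <= cnt Q W'.
Proof.
  intros Hinj HPQ W.
  set (l := filter (fun v => pb (P v)) (seq 0 W)).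
  assert (Hl : forall v, In v l -> P v).
  { intros v Hv. unfold l in Hv. apply filter_In in Hv. destruct Hv as [_ Hv]. unfold pb in Hv.
    destruct (EMI (P v)); auto; discriminate. }
  exists (S (list_max (map h l))).
  rewrite !filter_cnt. fold l. rewrite <- (length_map h l).
  apply NoDup_incl_length.
  - apply NoDup_map_NoDup_ForallPairs.
    + intros u v Hu Hv E. apply Hinj; auto.
    + unfold l. apply NoDup_filter, seq_NoDup.
  - intros y Hy. apply in_map_iff in Hy. destruct Hy as [v [Hv1 Hv2]]. subst y.
    apply filter_In. split.
    + apply in_seq. split. lia.
      assert (h v <= list_max (map h l)).
      { assert (F := proj1 (list_max_le (map h l) (list_max (map h l))) (le_n _)).
        rewrite Forall_forall in F. apply F. apply in_map; auto. }
      lia.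
    + unfold pb. destruct (EMI (Q (h v))); auto.
Qed.

Definition ge (St : eqstr) x m := exists W, m <= cnt (E St x) W.
Definition minm (St : eqstr) y := forall v, v < y -> ~ E St y v.

Lemma E_cls St x y : E St x y -> forall v, E St x v <-> E St y v.
Proof. intros H v. split; intro H'. apply (E_trans St _ x); auto. apply E_sym; auto.
  apply (E_trans St _ y); auto. Qed.
Lemma cnt_cls St x y W : E St x y -> cnt (E St x) W = cnt (E St y) W.
Proof. intro H. apply cnt_ext. apply E_cls; auto. Qed.
Lemma ge_cls St x y m : E St x y -> ge St x m -> ge St y m.
Proof. intros H [W HW]. exists W. rewrite <- (cnt_cls _ _ _ _ H). auto. Qed.
Lemma ge_mono St x m m' : m' <= m -> ge St x m -> ge St x m'.
Proof. intros H [W HW]. exists W. lia. Qed.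
Lemma ge_0 St x : ge St x 0.
Proof. exists 0. lia. Qed.
Lemma ge_emb A B g x m : is_embedding A B g -> E A x x -> ge A x m -> ge B (g x) m.
Proof.
  intros [H1 [H2 H3]] Hx [W HW].
  assert (Ux : univ A x) by (apply (proj1 (E_univ A x x Hx))).
  destruct (cnt_inj (E A x) (E B (g x)) g) with (W := W) as [W' HW'].
  - intros u v Hu Hv. apply H2; eapply E_univ; eauto.
  - intros v Hv. apply H3; auto. eapply E_univ; eauto.
  - exists W'. lia.
Qed.
Lemma self_count St x : E St x x -> ge St x (S (cnt (E St x) x)).
Proof. intro H. exists (S x). rewrite cnt_S. destruct (EMI (E St x x)); [lia|contradiction]. Qed.

Lemma min_exists St x : E St x x -> exists j, E St x j /\ E St j j /\ minm St j.
Proof.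
  intro H. destruct (least_ex (E St x)) as [j [Hj1 Hj2]]. eauto.
  exists j. split; auto. split. apply (E_trans St _ x); auto. apply E_sym; auto.
  intros v Hv Hjv. apply (Hj2 v Hv). apply (E_trans St _ j); auto.
Qed.
Lemma min_le St y z : minm St y -> E St y z -> y <= z.
Proof. intros H Hz. destruct (le_lt_dec y z); auto. exfalso; apply (H z); auto. Qed.
Lemma min_uniq St y z : minm St y -> minm St z -> E St y z -> y = z.
Proof. intros Hy Hz H. assert (y <= z) by (apply (min_le St); auto).
  assert (z <= y) by (apply (min_le St); auto; apply E_sym; auto). lia. Qed.

Definition INF0 (B : eqstr) m := forall k, exists y, k <= y /\ E B y y /\ minm B y /\ ge B y m.
Lemma INF0_mono B m m' : m' <= m -> INF0 B m -> INF0 B m'.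
Proof. intros H HI k. destruct (HI k) as [y [? [? [? ?]]]]. exists y. repeat split; auto.
  eapply ge_mono; eauto. Qed.

Lemma list_choice (Rr : nat -> nat -> Prop) k :
  exists Q, forall j, j < k -> (exists a, Rr j a) -> exists a, In a Q /\ Rr j a.
Proof.
  induction k. exists []. intros; lia.
  destruct IHk as [Q HQ]. destruct (classic (exists a, Rr k a)) as [[a Ha]|Hn].
  - exists (a :: Q). intros j Hj Hex. destruct (Nat.eq_dec j k).
    + subst. exists a. simpl; auto.
    + destruct (HQ j) as [b [? ?]]; auto. lia. exists b. simpl; auto.
  - exists Q. intros j Hj Hex. destruct (Nat.eq_dec j k). subst; contradiction.
    apply HQ; auto. lia.
Qed.

Lemma bad_list A B g : is_embedding A B g ->
  exists Q, forall x, E A x x -> (exists m, ge A x m /\ ~ INF0 B m) -> exists z, In z Q /\ E A x z.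
Proof.
  intro Hg.
  destruct (classic (exists m, ~ INF0 B m)) as [Hm|Hm].
  2: { exists []. intros x _ [m [_ Hc]]. exfalso. apply Hm. eauto. }
  destruct (least_ex _ Hm) as [m0 [Hm0 Hm0']].
  assert (Hk : exists k, forall y, k <= y -> ~ (E B y y /\ minm B y /\ ge B y m0)).
  { apply NNPP. intro Hn. apply Hm0. intro k. apply NNPP. intro Hn2. apply Hn. exists k.
    intros y Hy Hc. apply Hn2. exists y. tauto. }
  destruct Hk as [k Hk].
  destruct (list_choice (fun j a => E A a a /\ ge A a m0 /\ E B j (g a)) k) as [Q HQ].
  exists Q. intros x Hx [m [Hge HI]].
  assert (Hle : m0 <= m).
  { destruct (le_lt_dec m0 m); auto. exfalso. apply (Hm0' m); auto. }
  assert (Hx0 : ge A x m0) by (eapply ge_mono; eauto).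
  assert (Hgx : ge B (g x) m0) by (eapply ge_emb; eauto).
  assert (Ugx : E B (g x) (g x)).
  { destruct Hg as [H1 [H2 H3]]. apply E_refl, H1. apply (proj1 (E_univ A x x Hx)). }
  destruct (min_exists B (g x) Ugx) as [j [Hj1 [Hj2 Hj3]]].
  assert (Hjk : j < k).
  { destruct (le_lt_dec k j); auto. exfalso. apply (Hk j); auto.
    split; [auto| split; [auto| apply (ge_cls B (g x)); auto]]. }
  destruct (HQ j Hjk) as [a [Ha1 [Ha2 [Ha3 Ha4]]]].
  { exists x. split; auto. split; auto. apply E_sym; auto. }
  exists a. split; auto. destruct Hg as [H1 [H2 H3]].
  apply H3. apply (proj1 (E_univ A x x Hx)). apply (proj1 (E_univ A a a Ha2)).
  apply (E_trans B _ j); auto.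
Qed.

Lemma special_list A B g s :
  (forall x, univ A x -> infinite_class A x -> exists z, In z s /\ E A x z) ->
  is_embedding A B g ->
  exists Sp, forall x, E A x x -> ~ (exists z, In z Sp /\ E A x z) ->
    (exists m, ~ ge A x m) /\ forall m, ge A x m -> INF0 B m.
Proof.
  intros Hs Hg. destruct (bad_list A B g Hg) as [Q HQ].
  exists (s ++ Q). intros x Hx Hn. split.
  - assert (Hfin : ~ infinite_class A x).
    { intro Hi. destruct (Hs x (proj1 (E_univ A x x Hx)) Hi) as [z [? ?]]. apply Hn. exists z.
      split; auto. apply in_or_app; auto. }
    unfold infinite_class in Hfin.
    assert (HN : exists N, forall y, N <= y -> ~ E A x y).
    { apply NNPP. intro H. apply Hfin. intro n. apply NNPP. intro H'. apply H. exists n.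
      intros y Hy Hxy. apply H'. eauto. }
    destruct HN as [N HN]. exists (S (cnt (E A x) N)). intros [W HW].
    assert (K := cnt_bound _ _ HN W). lia.
  - intros m Hm. apply NNPP. intro HI. destruct (HQ x Hx) as [z [? ?]]. eauto.
    apply Hn. exists z. split; auto. apply in_or_app; auto.
Qed.

Definition goodB (B : eqstr) (Gs : list nat) y m :=
  E B y y /\ minm B y /\ ~ (exists z, In z Gs /\ E B y z) /\ ge B y m.

Lemma INF_good B m Gs : INF0 B m -> forall k, exists y, k <= y /\ goodB B Gs y m.
Proof.
  intros HI k. destruct (HI (max k (S (list_max Gs)))) as [y [Hy1 [Hy2 [Hy3 Hy4]]]].
  exists y. split. lia. split; auto. split; auto. split; auto.
  intros [z [Hz1 Hz2]]. assert (y <= z) by (apply (min_le B); auto).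
  assert (F := proj1 (list_max_le Gs (list_max Gs)) (le_n _)).
  rewrite Forall_forall in F. specialize (F z Hz1). lia.
Qed.

Definition spc (A : eqstr) Sp x := exists z, In z Sp /\ E A x z.
Definition tgt (A : eqstr) (g : nat -> nat) Sp x := fm (fun x z => E A x z) g Sp x.
Definition rep (A : eqstr) x := mu (fun x v => E A x v \/ ~ E A x x) x.
Definition szA (A : eqstr) Sp x := mu (fun x m => spc A Sp x \/ ~ E A x x \/ ~ ge A x (S m)) x.
Definition isrep (A : eqstr) Sp r := E A r r /\ ~ spc A Sp r /\ rep A r = r.
Definition nxt (A B : eqstr) (g : nat -> nat) Sp w :=
  mu (fun w y => ~ isrep A Sp (p1 w) \/ (p2 w <= y /\ goodB B (map g Sp) y (szA A Sp (p1 w)))) w.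
Fixpoint TT (A B : eqstr) g Sp n :=
  match n with 0 => 0
  | S n => if EMI (isrep A Sp n) then S (nxt A B g Sp (pr n (TT A B g Sp n))) else TT A B g Sp n end.
Definition tn A B g Sp x := nxt A B g Sp (pr (rep A x) (TT A B g Sp (rep A x))).
Definition bb A B g Sp x := if EMI (spc A Sp x) then tgt A g Sp x else tn A B g Sp x.
Definition ii (A : eqstr) x := cnt (E A x) x.
Definition ff A B g Sp x :=
  mu (fun x w => ~ E A x x \/ (E B (bb A B g Sp x) w /\ cnt (E B (bb A B g Sp x)) w = ii A x)) x.

Definition KP (A B : eqstr) Sp := forall x, E A x x -> ~ spc A Sp x ->
    (exists m, ~ ge A x m) /\ forall m, ge A x m -> INF0 B m.

Lemma EAxx (A : eqstr) x y : E A x y -> E A x x /\ E A y y.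
Proof. intro H. destruct (E_univ A x y H). split; apply E_refl; auto. Qed.

Lemma tgt_spec A g Sp x : spc A Sp x -> exists z, In z Sp /\ E A x z /\ tgt A g Sp x = g z.
Proof.
  unfold spc, tgt. induction Sp as [|a L IH]; intros [z [Hz1 Hz2]]. destruct Hz1.
  simpl. destruct (EMI (E A x a)). exists a. simpl; auto.
  destruct Hz1. subst; contradiction.
  destruct IH as [z' [? [? ?]]]. eauto. exists z'. simpl; auto.
Qed.
Lemma tgt_cls A g Sp x y : E A x y -> tgt A g Sp x = tgt A g Sp y.
Proof.
  intro H. unfold tgt. induction Sp as [|a L IH]; simpl. reflexivity.
  destruct (EMI (E A x a)), (EMI (E A y a)); auto; exfalso.
  apply n. apply (E_cls A x y H); auto. apply n. apply (E_cls A x y H); auto.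
Qed.
Lemma spc_cls A Sp x y : E A x y -> (spc A Sp x <-> spc A Sp y).
Proof. intro H. unfold spc. split; intros [z [? ?]]; exists z; split; auto;
  apply (E_cls A x y H); auto. Qed.

Lemma rep_spec A x : E A x x -> E A x (rep A x) /\ forall v, v < rep A x -> ~ E A x v.
Proof.
  intro H. unfold rep. destruct (mu_spec (fun x v => E A x v \/ ~ E A x x) x) as [H1 H2].
  exists x; auto. split. destruct H1; [auto|contradiction].
  intros v Hv Hc. apply (H2 v Hv). auto.
Qed.
Lemma rep_cls A x y : E A x y -> rep A x = rep A y.
Proof.
  intro H. destruct (EAxx A x y H). unfold rep. apply mu_ext.
  - intro n. assert (K := E_cls A x y H n). tauto.
  - exists x; auto.
Qed.
Lemma rep_isrep A Sp x : E A x x -> ~ spc A Sp x -> isrep A Sp (rep A x).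
Proof.
  intros H Hn. destruct (rep_spec A x H) as [H1 H2]. destruct (EAxx A _ _ H1).
  split; auto. split. rewrite <- (spc_cls A Sp _ _ H1); auto.
  symmetry. apply rep_cls; auto.
Qed.

Lemma sz_spec A B Sp x : KP A B Sp -> E A x x -> ~ spc A Sp x ->
  ~ ge A x (S (szA A Sp x)) /\ ge A x (szA A Sp x).
Proof.
  intros HK H Hn. unfold szA.
  destruct (mu_spec (fun x m => spc A Sp x \/ ~ E A x x \/ ~ ge A x (S m)) x) as [H1 H2].
  { destruct (HK x H Hn) as [[m Hm] _]. destruct m. exfalso; apply Hm, ge_0. exists m; auto. }
  split. tauto.
  destruct (mu (fun x m => spc A Sp x \/ ~ E A x x \/ ~ ge A x (S m)) x) eqn:E. apply ge_0.
  apply NNPP. intro Hc. apply (H2 n). lia. auto.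
Qed.

Lemma nxt_spec A B g Sp r lo : KP A B Sp -> isrep A Sp r ->
  lo <= nxt A B g Sp (pr r lo) /\ goodB B (map g Sp) (nxt A B g Sp (pr r lo)) (szA A Sp r).
Proof.
  intros HK [H1 [H2 H3]]. unfold nxt.
  destruct (mu_spec (fun w y => ~ isrep A Sp (p1 w) \/ (p2 w <= y /\ goodB B (map g Sp) y (szA A Sp (p1 w)))) (pr r lo)) as [K1 K2].
  { destruct (HK r H1 H2) as [_ HI]. destruct (sz_spec A B Sp r HK H1 H2) as [_ Hge].
    destruct (INF_good B _ (map g Sp) (HI _ Hge) lo) as [y [? ?]]. exists y. right.
    rewrite p1_pr, p2_pr. auto. }
  rewrite p1_pr, p2_pr in K1. destruct K1 as [K1|K1]. exfalso; apply K1; split; auto. auto.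
Qed.

Lemma TT_mono A B g Sp n m : KP A B Sp -> n <= m -> TT A B g Sp n <= TT A B g Sp m.
Proof. intro HK. induction 1. lia. simpl. destruct (EMI (isrep A Sp m)).
  destruct (nxt_spec A B g Sp m (TT A B g Sp m) HK i). lia. lia. Qed.

Lemma bb_cls A B g Sp x y : E A x y -> bb A B g Sp x = bb A B g Sp y.
Proof.
  intro H. unfold bb. destruct (EMI (spc A Sp x)), (EMI (spc A Sp y)).
  - apply tgt_cls; auto.
  - exfalso. apply n. apply (spc_cls A Sp x y H); auto.
  - exfalso. apply n. apply (spc_cls A Sp x y H); auto.
  - unfold tn. rewrite (rep_cls A x y H). reflexivity.
Qed.

Lemma bb_size A B g Sp x : KP A B Sp -> is_embedding A B g -> E A x x ->
  ge B (bb A B g Sp x) (S (ii A x)).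
Proof.
  intros HK Hg H. assert (Hs := self_count A x H). fold (ii A x) in Hs. unfold bb.
  destruct (EMI (spc A Sp x)) as [Hsp|Hsp].
  - destruct (tgt_spec A g Sp x Hsp) as [z [_ [Hz1 Hz2]]]. rewrite Hz2.
    apply ge_emb with (A := A). auto. apply (EAxx A x z Hz1). apply (ge_cls A x); auto.
  - unfold tn. destruct (rep_spec A x H) as [R1 _].
    assert (Hir := rep_isrep A Sp x H Hsp). destruct Hir as [I1 [I2 I3]].
    destruct (nxt_spec A B g Sp (rep A x) (TT A B g Sp (rep A x)) HK (conj I1 (conj I2 I3))) as [_ [_ [_ [_ G]]]].
    destruct (sz_spec A B Sp (rep A x) HK I1 I2) as [S1 _].
    apply (ge_mono _ _ (szA A Sp (rep A x))); auto.
    destruct (le_lt_dec (S (ii A x)) (szA A Sp (rep A x))); auto. exfalso. apply S1.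
    apply (ge_mono _ _ (S (ii A x))). lia. apply (ge_cls A x); auto.
Qed.

Lemma ff_spec A B g Sp x : KP A B Sp -> is_embedding A B g -> E A x x ->
  E B (bb A B g Sp x) (ff A B g Sp x) /\ cnt (E B (bb A B g Sp x)) (ff A B g Sp x) = ii A x.
Proof.
  intros HK Hg H. unfold ff.
  destruct (mu_spec (fun x w => ~ E A x x \/ (E B (bb A B g Sp x) w /\ cnt (E B (bb A B g Sp x)) w = ii A x)) x) as [K1 _].
  { destruct (bb_size A B g Sp x HK Hg H) as [W HW]. destruct (cnt_ivt _ _ _ HW) as [w [_ [? ?]]].
    exists w. right. auto. }
  destruct K1; [contradiction|auto].
Qed.

Lemma bb_distinct A B g Sp x y : KP A B Sp -> is_embedding A B g -> E A x x -> E A y y ->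
  E B (bb A B g Sp x) (bb A B g Sp y) -> E A x y.
Proof.
  intros HK Hg Hx Hy H. destruct Hg as [G1 [G2 G3]]. unfold bb in H.
  destruct (EMI (spc A Sp x)) as [Sx|Sx], (EMI (spc A Sp y)) as [Sy|Sy].
  - destruct (tgt_spec A g Sp x Sx) as [z [_ [Z1 Z2]]]. destruct (tgt_spec A g Sp y Sy) as [z' [_ [Z1' Z2']]].
    rewrite Z2, Z2' in H. destruct (EAxx A _ _ Z1). destruct (EAxx A _ _ Z1').
    apply G3 in H; try (eapply E_univ; eauto).
    apply (E_trans A _ z); auto. apply (E_trans A _ z'); auto. apply E_sym; auto.
  - exfalso. destruct (tgt_spec A g Sp x Sx) as [z [Zin [Z1 Z2]]]. rewrite Z2 in H.
    unfold tn in H. destruct (rep_isrep A Sp y Hy Sy) as [I1 [I2 I3]].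
    destruct (nxt_spec A B g Sp (rep A y) (TT A B g Sp (rep A y)) HK (conj I1 (conj I2 I3))) as [_ [_ [_ [N _]]]].
    apply N. exists (g z). split. apply in_map; auto. apply E_sym; auto.
  - exfalso. destruct (tgt_spec A g Sp y Sy) as [z [Zin [Z1 Z2]]]. rewrite Z2 in H.
    unfold tn in H. destruct (rep_isrep A Sp x Hx Sx) as [I1 [I2 I3]].
    destruct (nxt_spec A B g Sp (rep A x) (TT A B g Sp (rep A x)) HK (conj I1 (conj I2 I3))) as [_ [_ [_ [N _]]]].
    apply N. exists (g z). split. apply in_map; auto. auto.
  - unfold tn in H.
    assert (Ix := rep_isrep A Sp x Hx Sx). assert (Iy := rep_isrep A Sp y Hy Sy).
    destruct (rep_spec A x Hx) as [Rx _]. destruct (rep_spec A y Hy) as [Ry _].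
    destruct (Nat.eq_dec (rep A x) (rep A y)) as [Eq|Ne].
    + rewrite Eq in Rx. apply (E_trans A _ (rep A y)); auto. apply E_sym; auto.
    + exfalso.
      assert (Kx := nxt_spec A B g Sp (rep A x) (TT A B g Sp (rep A x)) HK Ix).
      assert (Ky := nxt_spec A B g Sp (rep A y) (TT A B g Sp (rep A y)) HK Iy).
      destruct Kx as [Lx [_ [Mx _]]]. destruct Ky as [Ly [_ [My _]]].
      assert (Eqn := min_uniq B _ _ Mx My H).
      assert (Tx : TT A B g Sp (S (rep A x)) = S (nxt A B g Sp (pr (rep A x) (TT A B g Sp (rep A x))))).
      { simpl. destruct (EMI (isrep A Sp (rep A x))); [reflexivity|contradiction]. }
      assert (Ty : TT A B g Sp (S (rep A y)) = S (nxt A B g Sp (pr (rep A y) (TT A B g Sp (rep A y))))).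
      { simpl. destruct (EMI (isrep A Sp (rep A y))); [reflexivity|contradiction]. }
      destruct (lt_eq_lt_dec (rep A x) (rep A y)) as [[Lt|Lt]|Lt]; [|contradiction|].
      * assert (M := TT_mono A B g Sp (S (rep A x)) (rep A y) HK Lt). lia.
      * assert (M := TT_mono A B g Sp (S (rep A y)) (rep A x) HK Lt). lia.
Qed.

Lemma ff_emb A B g Sp : KP A B Sp -> is_embedding A B g -> is_embedding A B (ff A B g Sp).
Proof.
  intros HK Hg. split; [|split].
  - intros x Ux. destruct (ff_spec A B g Sp x HK Hg (E_refl A x Ux)) as [H _].
    exact (proj2 (E_univ B _ _ H)).
  - intros x y Ux Uy Exy.
    assert (Hx := E_refl A x Ux). assert (Hy := E_refl A y Uy).
    destruct (ff_spec A B g Sp x HK Hg Hx) as [F1 F2]. destruct (ff_spec A B g Sp y HK Hg Hy) as [F3 F4].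
    assert (Cxy : E A x y).
    { apply (bb_distinct A B g Sp); auto. rewrite <- Exy in F3.
      apply (E_trans B _ (ff A B g Sp x)); auto. apply E_sym; auto. }
    rewrite (bb_cls A B g Sp x y Cxy) in F1, F2. rewrite <- Exy in F4. rewrite F2 in F4.
    unfold ii in F4. rewrite (cnt_cls A x y x Cxy) in F4.
    destruct (lt_eq_lt_dec x y) as [[Lt|Lt]|Lt]; auto; exfalso.
    + assert (K := cnt_hit (E A y) y x Lt (E_sym A _ _ Cxy)). lia.
    + assert (K := cnt_hit (E A y) x y Lt Hy). lia.
  - intros x y Ux Uy.
    assert (Hx := E_refl A x Ux). assert (Hy := E_refl A y Uy).
    destruct (ff_spec A B g Sp x HK Hg Hx) as [F1 F2]. destruct (ff_spec A B g Sp y HK Hg Hy) as [F3 F4].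
    split; intro H.
    + rewrite (bb_cls A B g Sp x y H) in F1. apply (E_trans B _ (bb A B g Sp y)); auto. apply E_sym; auto.
    + apply (bb_distinct A B g Sp); auto.
      apply (E_trans B _ (ff A B g Sp x)); auto. apply (E_trans B _ (ff A B g Sp y)); auto. apply E_sym; auto.
Qed.

Lemma dec_ge (St : eqstr) Y : Dec Y (fun z => E St (p1 z) (p2 z)) ->
  Dec (jump Y) (fun z => ge St (p1 z) (p2 z)).
Proof.
  intro H. assert (Hc := comp_cnt Y (fun x v => E St x v) H).
  assert (D : Dec Y (fun z => (fun x W => p2 x <= cnt (E St (p1 x)) W) (p1 z) (p2 z))).
  { apply dec_le. apply (comp_comp _ _ _ (comp_p2 Y) (comp_p1 Y)).
    apply (comp_app2 _ _ _ _ Hc). apply (comp_comp _ _ _ (comp_p1 Y) (comp_p1 Y)). apply comp_p2. }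
  apply dec_jump in D. exact D.
Qed.

Lemma dec_minm (St : eqstr) Y : Dec Y (fun z => E St (p1 z) (p2 z)) -> Dec Y (minm St).
Proof.
  intro H. assert (Hc := comp_cnt Y (fun x v => E St x v) H).
  eapply dec_ext. apply (dec_eq _ _ _ (comp_app2 _ _ _ _ Hc (comp_id Y) (comp_id Y)) (comp_const Y 0)).
  intro y. simpl. rewrite cnt_zero. reflexivity.
Qed.

Lemma ff_comp A B g Sp Y : KP A B Sp -> is_embedding A B g ->
  Dec Y (fun z => E A (p1 z) (p2 z)) -> Dec Y (fun z => E B (p1 z) (p2 z)) ->
  computable_in (jump Y) (ff A B g Sp).
Proof.
  intros HK Hg HA HB.
  set (J := jump Y).
  assert (cp1 := comp_p1 J). assert (cp2 := comp_p2 J). assert (cid := comp_id J).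
  assert (HAxx : Dec Y (fun x => E A x x)) by exact (dec_app2 _ _ _ _ HA (comp_id Y) (comp_id Y)).
  assert (HBxx : Dec Y (fun x => E B x x)) by exact (dec_app2 _ _ _ _ HB (comp_id Y) (comp_id Y)).
  assert (Hspc : Dec Y (spc A Sp)) by exact (dec_inlist Y (fun x z => E A x z) Sp HA).
  assert (Htgt : computable_in Y (tgt A g Sp)) by exact (comp_fm Y _ g Sp HA).
  assert (Hrep : computable_in Y (rep A)).
  { apply comp_mu2.
    - exact (dec_or _ _ _ HA (dec_not _ _ (dec_comp _ _ _ HAxx (comp_p1 Y)))).
    - intro x. destruct (classic (E A x x)). exists x; auto. exists 0; auto. }
  assert (HgeA := dec_ge A Y HA). assert (HgeB := dec_ge B Y HB).
  assert (HszA : computable_in J (szA A Sp)).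
  { apply comp_mu2.
    - apply dec_or. exact (dec_lift _ _ (dec_comp _ _ _ Hspc (comp_p1 Y))).
      apply dec_or. exact (dec_lift _ _ (dec_not _ _ (dec_comp _ _ _ HAxx (comp_p1 Y)))).
      apply dec_not. exact (dec_app2 _ (ge A) _ _ HgeA cp1 (comp_comp _ _ _ (comp_S J) cp2)).
    - intro x. destruct (classic (spc A Sp x)). exists 0; auto.
      destruct (classic (E A x x)). 2: exists 0; auto.
      destruct (HK x H0 H) as [[m Hm] _]. destruct m. exfalso; apply Hm, ge_0. exists m; auto. }
  assert (Hisrep : Dec J (isrep A Sp)).
  { apply dec_lift. apply dec_and. exact HAxx. apply dec_and. apply dec_not. exact Hspc.
    apply dec_eq. exact Hrep. apply comp_id. }
  assert (Hgood : Dec J (fun z => goodB B (map g Sp) (p1 z) (p2 z))).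
  { apply dec_and. exact (dec_lift _ _ (dec_comp _ _ _ HBxx (comp_p1 Y))).
    apply dec_and. exact (dec_lift _ _ (dec_comp _ _ _ (dec_minm B Y HB) (comp_p1 Y))).
    apply dec_and. apply dec_lift. apply dec_not.
    exact (dec_comp _ _ _ (dec_inlist Y (fun x z => E B x z) (map g Sp) HB) (comp_p1 Y)).
    exact HgeB. }
  assert (Hnxt : computable_in J (nxt A B g Sp)).
  { apply comp_mu2.
    - apply dec_or. apply dec_not. exact (dec_comp _ _ _ Hisrep (comp_comp _ _ _ cp1 cp1)).
      apply dec_and. apply dec_le. exact (comp_comp _ _ _ cp2 cp1). exact cp2.
      exact (dec_app2 _ _ _ _ Hgood cp2 (comp_comp _ _ _ HszA (comp_comp _ _ _ cp1 cp1))).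
    - intro w. destruct (classic (isrep A Sp (p1 w))) as [[H1 [H2 H3]]|Hn]. 2: exists 0; auto.
      destruct (HK _ H1 H2) as [_ HI]. destruct (sz_spec A B Sp _ HK H1 H2) as [_ Hge].
      destruct (INF_good B _ (map g Sp) (HI _ Hge) (p2 w)) as [y [? ?]]. exists y. right. auto. }
  assert (HTT : computable_in J (TT A B g Sp)).
  { set (s := fun z a => ifz (tv (isrep A Sp (p2 z))) (S (nxt A B g Sp (pr (p2 z) a))) a).
    assert (Hs : C2 J s).
    { unfold C2, s. apply comp_ifz. exact (dec_comp _ _ _ Hisrep (comp_comp _ _ _ cp2 cp1)).
      apply (comp_comp _ _ _ (comp_S J)). apply (comp_comp _ _ _ Hnxt).
      apply comp_pair. exact (comp_comp _ _ _ cp2 cp1). exact cp2. exact cp2. }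
    assert (HR := comp_rec J (fun _ => 0) s (comp_const J 0) Hs).
    eapply comp_ext. apply (comp_app2 _ _ _ _ HR (comp_const J 0) cid).
    intro n. simpl. induction n. reflexivity. simpl. rewrite IHn. unfold s. rewrite p2_pr.
    unfold tv. destruct (EMI (isrep A Sp n)); reflexivity. }
  assert (Htn : computable_in J (tn A B g Sp)).
  { unfold tn. apply (comp_comp _ _ _ Hnxt). apply comp_pair. exact (comp_lift _ _ Hrep).
    exact (comp_comp _ _ _ HTT (comp_lift _ _ Hrep)). }
  assert (Hbb : computable_in J (bb A B g Sp)).
  { eapply comp_ext. apply (comp_ifz _ _ _ _ (dec_lift _ _ Hspc) (comp_lift _ _ Htgt) Htn).
    intro x. unfold bb, tv. destruct (EMI (spc A Sp x)); reflexivity. }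
  assert (HcB : C2 J (fun x W => cnt (E B x) W)) by exact (comp_lift _ _ (comp_cnt Y (fun x v => E B x v) HB)).
  assert (Hii : computable_in J (ii A)).
  { apply comp_lift. exact (comp_app2 _ _ _ _ (comp_cnt Y (fun x v => E A x v) HA) (comp_id Y) (comp_id Y)). }
  apply comp_mu2.
  - apply dec_or. exact (dec_lift _ _ (dec_not _ _ (dec_comp _ _ _ HAxx (comp_p1 Y)))).
    apply dec_and. exact (dec_app2 _ _ _ _ (dec_lift _ _ HB) (comp_comp _ _ _ Hbb cp1) cp2).
    apply dec_eq. exact (comp_app2 _ _ _ _ HcB (comp_comp _ _ _ Hbb cp1) cp2).
    exact (comp_comp _ _ _ Hii cp1).
  - intro x. destruct (classic (E A x x)) as [H|H]. 2: exists 0; auto.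
    destruct (bb_size A B g Sp x HK Hg H) as [W HW]. destruct (cnt_ivt _ _ _ HW) as [w [_ [? ?]]].
    exists w. right. auto.
Qed.

Lemma core A B g s Y :
  (forall x, univ A x -> infinite_class A x -> exists z, In z s /\ E A x z) ->
  is_embedding A B g ->
  Dec Y (fun z => E A (p1 z) (p2 z)) -> Dec Y (fun z => E B (p1 z) (p2 z)) ->
  exists f, is_embedding A B f /\ computable_in (jump Y) f.
Proof.
  intros Hs Hg HA HB. destruct (special_list A B g s Hs Hg) as [Sp HSp].
  assert (HK : KP A B Sp) by exact HSp.
  exists (ff A B g Sp). split. apply ff_emb; auto. apply ff_comp; auto.
Qed.

Lemma list_choice2 (Rr : nat -> nat -> Prop) L :
  exists Q, forall z, In z L -> (exists a, Rr z a) -> exists a, In a Q /\ Rr z a.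
Proof.
  induction L as [|b L IH]. exists []. intros z [].
  destruct IH as [Q HQ]. destruct (classic (exists a, Rr b a)) as [[a Ha]|Hn].
  - exists (a :: Q). intros z [Hz|Hz] Hex. subst; exists a; simpl; auto.
    destruct (HQ z Hz Hex) as [c [? ?]]. exists c; simpl; auto.
  - exists Q. intros z [Hz|Hz] Hex. subst; contradiction. auto.
Qed.

Lemma inf_transfer A B h s :
  (forall x, univ A x -> infinite_class A x -> exists z, In z s /\ E A x z) ->
  is_embedding B A h ->
  exists s', forall x, univ B x -> infinite_class B x -> exists z, In z s' /\ E B x z.
Proof.
  intros Hs Hh.
  destruct (list_choice2 (fun z b => univ B b /\ E A (h b) z) s) as [Q HQ].
  exists Q. intros x Ux Ix.
  assert (Exx := E_refl B x Ux).
  assert (IA : infinite_class A (h x)).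
  { intro n. destruct (cnt_unbounded _ Ix (S n)) as [W HW].
    assert (G : ge A (h x) (S n)) by (apply (ge_emb B A h x); auto; exists W; auto).
    destruct G as [W' HW']. apply (cnt_big _ _ _ HW'). }
  destruct Hh as [H1 [H2 H3]].
  destruct (Hs (h x) (H1 x Ux) IA) as [z [Hz1 Hz2]].
  destruct (HQ z Hz1) as [a [Ha1 [Ha2 Ha3]]]. exists x; auto.
  exists a. split; auto. apply H3; auto. apply (E_trans A _ z); auto. apply E_sym; auto.
Qed.

Lemma even_odd2 n : Nat.even (S (2 * n)) = false.
Proof. rewrite Nat.even_succ, <- Nat.negb_even, Nat.even_even. reflexivity. Qed.

Lemma comp_double Y f : computable_in Y f -> computable_in Y (fun x => 2 * f x).
Proof. intro H. eapply comp_ext. apply (comp_add _ _ _ H H). intro; simpl; lia. Qed.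

Lemma dec_EA A B : Dec (join (diag A) (diag B)) (fun z => E A (p1 z) (p2 z)).
Proof.
  set (Y := join (diag A) (diag B)).
  eapply dec_ext. apply (dec_oracle Y (fun z => 2 * S (2 * z))).
  apply comp_double. apply (comp_comp _ _ _ (comp_S Y)). apply comp_double. apply comp_id.
  intro z. unfold Y, join, diag. rewrite Nat.even_even, Nat.div2_double, even_odd2, Nat.div2_succ_double.
  fold (p1 z) (p2 z). tauto.
Qed.
Lemma dec_EB A B : Dec (join (diag A) (diag B)) (fun z => E B (p1 z) (p2 z)).
Proof.
  set (Y := join (diag A) (diag B)).
  eapply dec_ext. apply (dec_oracle Y (fun z => S (2 * S (2 * z)))).
  apply (comp_comp _ _ _ (comp_S Y)).
  apply comp_double. apply (comp_comp _ _ _ (comp_S Y)). apply comp_double. apply comp_id.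
  intro z. unfold Y, join, diag. rewrite even_odd2, Nat.div2_succ_double, even_odd2, Nat.div2_succ_double.
  fold (p1 z) (p2 z). tauto.
Qed.

Theorem theorem3p1 (A : eqstr) :
  finitely_many_infinite_classes A -> rel_delta02_bi_emb_categorical A.
Proof.
  intros [s Hs] B [[f0 Hf0] [g0 Hg0]]. split.
  - exact (core A B f0 s _ Hs Hf0 (dec_EA A B) (dec_EB A B)).
  - destruct (inf_transfer A B g0 s Hs Hg0) as [s' Hs'].
    exact (core B A g0 s' _ Hs' Hg0 (dec_EB A B) (dec_EA A B)).
Qed.
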